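(* Let $A=(a_{ij})_{i,j=1}^n$ be the weighted adjacency matrix of a (possibly directed) graph on vertices $v_1,\dots,v_n$, with nonnegative entries, such that every out-degree $o(v_i)=\sum_{j=1}^n a_{ij}$ is positive. Let $D_o=\operatorname{diag}(o(v_1),\dots,o(v_n))$ and $P=D_o^{-1}A$. Define $\nu(v_j)=\sum_{\ell=1}^n p_{\ell j}$, assume $\nu(v_j)>0$ for all $j$, and let $D_\nu=\operatorname{diag}(\nu(v_1),\dots,\nu(v_n))$. Then the matrix $Q=P D_\nu^{-1} P^\top$ is doubly stochastic.
   Context: $P$ is the row-stochastic transition matrix of the random walk on the graph ($p_{ij}$ is the probability of moving from $v_i$ to $v_j$ in one step). The condition $\nu(v_j)>0$ means every vertex has at least one incoming edge (e.g., ensured by adding self-loops), so that $D_\nu$ is invertible. A doubly stochastic matrix is a nonnegative matrix whose rows and columns each sum to $1$. *)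

(* Defs.v *)
From mathcomp Require Import all_boot all_order all_algebra.
Set Implicit Arguments. Unset Strict Implicit. Unset Printing Implicit Defensive.
Import Order.TTheory GRing.Theory Num.Theory.
Local Open Scope ring_scope.

Definition outdeg (R : numFieldType) (n : nat) (A : 'M[R]_n) (i : 'I_n) : R :=
  \sum_(j < n) A i j.

Definition Do (R : numFieldType) (n : nat) (A : 'M[R]_n) : 'M[R]_n :=
  diag_mx (\row_i outdeg A i).

Definition transP (R : numFieldType) (n : nat) (A : 'M[R]_n) : 'M[R]_n :=
  invmx (Do A) *m A.

Definition nu (R : numFieldType) (n : nat) (A : 'M[R]_n) (j : 'I_n) : R :=
  \sum_(l < n) transP A l j.

Definition Dnu (R : numFieldType) (n : nat) (A : 'M[R]_n) : 'M[R]_n :=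
  diag_mx (\row_j nu A j).

Definition Qmat (R : numFieldType) (n : nat) (A : 'M[R]_n) : 'M[R]_n :=
  transP A *m invmx (Dnu A) *m (transP A)^T.

Definition doubly_stochastic (R : numFieldType) (n : nat) (M : 'M[R]_n) : Prop :=
  (forall i j, 0 <= M i j) /\
  (forall i, \sum_(j < n) M i j = 1) /\
  (forall j, \sum_(i < n) M i j = 1).

(* Main.v *)
Require Import Defs.
From mathcomp Require Import all_boot all_order all_algebra.
Import Order.TTheory GRing.Theory Num.Theory.
Local Open Scope ring_scope.

Lemma invmx_diag (R : fieldType) n (d : 'rV[R]_n) :
  (forall j, d 0 j != 0) -> invmx (diag_mx d) = diag_mx (\row_j (d 0 j)^-1).
Proof.
move=> hd.
have E : diag_mx (\row_j (d 0 j)^-1) *m diag_mx d = 1%:M.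
  rewrite mulmx_diag -diag_const_mx; congr diag_mx; apply/rowP=> j.
  by rewrite !mxE mulVf.
have [_ U] := mulmx1_unit E.
by rewrite -[RHS]mulmx1 -(mulmxV U) mulmxA E mul1mx.
Qed.

Theorem mainTheorem1 (R : realFieldType) (n : nat) (A : 'M[R]_n)
  (hA : forall i j, 0 <= A i j)
  (ho : forall i, 0 < outdeg A i)
  (hnu : forall j, 0 < nu A j) :
  doubly_stochastic (Qmat A).
Proof.
have PE l j : transP A l j = (outdeg A l)^-1 * A l j.
  rewrite /transP /Do invmx_diag; last by move=> k; rewrite mxE gt_eqF.
  by rewrite mul_diag_mx !mxE.
have P0 l j : 0 <= transP A l j by rewrite PE mulr_ge0 // invr_ge0 ltW.
have Prow l : \sum_j transP A l j = 1.
  under eq_bigr do rewrite PE.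
  by rewrite -mulr_sumr mulVf // gt_eqF // ho.
have QE i k : Qmat A i k = \sum_j transP A i j * (nu A j)^-1 * transP A k j.
  rewrite /Qmat /Dnu invmx_diag; last by move=> k'; rewrite mxE gt_eqF.
  rewrite mul_mx_diag mxE; apply: eq_bigr => j _; by rewrite !mxE.
split; [|split].
- move=> i k; rewrite QE; apply: sumr_ge0 => j _.
  by rewrite !mulr_ge0 // invr_ge0 ltW.
- move=> i; under eq_bigr do rewrite QE.
  rewrite exchange_big /=.
  rewrite -[RHS](Prow i); apply: eq_bigr => j _.
  rewrite -mulr_sumr -[\sum_(k < n) _]/(nu A j).
  by rewrite mulfVK // gt_eqF.
- move=> k; under eq_bigr do rewrite QE.
  rewrite exchange_big /=.
  rewrite -[RHS](Prow k); apply: eq_bigr => j _.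
  rewrite -mulr_suml -mulr_suml -[\sum_(i < n) _]/(nu A j).
  by rewrite mulfV ?mul1r // gt_eqF.
Qed.
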